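(* Let $\mathfrak{A}$ be a $(\circ,\wedge,\mathsf{A})$-algebra that is representable by partial functions and atomic, and in which composition is completely left-distributive over joins (for every $a\in\mathfrak{A}$ and every $S\subseteq\mathfrak{A}$ such that $\bigvee S$ exists, $\bigvee\{a\circ s\mid s\in S\}$ exists and equals $a\circ\bigvee S$). Let $\mathrm{At}(\mathfrak{A})$ be the set of atoms of $\mathfrak{A}$, and for $a\in\mathfrak{A}$ define the partial function $\theta(a)$ on $\mathrm{At}(\mathfrak{A})$ by $\theta(a)(x)=x\circ a$ if $x\circ a\neq 0$, and undefined otherwise. Then $x\circ a$ is an atom whenever it is nonzero, and $\theta$ is a complete representation of $\mathfrak{A}$ by partial functions with base $\mathrm{At}(\mathfrak{A})$.
   Context: A $(\circ,\wedge,\mathsf{A})$-algebra is a set with two binary operations $\circ,\wedge$ and one unary operation $\mathsf{A}$. An algebra of partial functions of this signature is a set of partial functions, with base $X$ the union of all their domains and ranges, closed under: composition $f\circ g=\{(x,z)\mid \exists y\,(x,y)\in f,(y,z)\in g\}$ (apply $f$ first, then $g$); intersection; antidomain $\mathsf{A}(f)=\{(x,x)\mid x\in X, x\notin\mathrm{dom}(f)\}$. A representation by partial functions is an isomorphism onto such an algebra. The order is $a\le b\iff a\wedge b=a$, with least element $0=\mathsf{A}(a)\circ a$. An atom is a minimal nonzero element; $\mathfrak{A}$ is atomic if every nonzero element is above an atom. A representation $\theta$ is complete if for every $S$ with $\bigvee S$ existing, $\theta(\bigvee S)=\bigcup\theta[S]$ (equivalently, for every nonempty $S$ with $\bigwedge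 S$ existing, $\theta(\bigwedge S)=\bigcap\theta[S]$). *)

(* Defs.v *)
Set Implicit Arguments.

Record alg := Alg {
  car :> Type;
  comp : car -> car -> car;   (* composition: comp f g = "f first, then g" *)
  meet : car -> car -> car;
  ad : car -> car
}.

Definition rel (X : Type) := X -> X -> Prop.
Definition functional (X : Type) (f : rel X) : Prop :=
  forall x y z, f x y -> f x z -> y = z.
Definition req (X : Type) (f g : rel X) : Prop := forall x y, f x y <-> g x y.
Definition rcomp (X : Type) (f g : rel X) : rel X :=
  fun x z => exists y, f x y /\ g y z.
Definition rmeet (X : Type) (f g : rel X) : rel X := fun x y => f x y /\ g x y.
(** antidomain relative to the base X (here the whole type X) *)
Definition rad (X : Type) (f : rel X) : rel X :=
  fun x y => x = y /\ ~ (exists z, f x z).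

(** theta is a representation of A by partial functions with base X:
    an injective homomorphism into partial functions on X, where X is
    the union of the domains and ranges of the theta a. *)
Definition is_rep (A : alg) (X : Type) (th : A -> rel X) : Prop :=
  (forall a, functional (th a)) /\
  (forall a b, req (th (comp A a b)) (rcomp (th a) (th b))) /\
  (forall a b, req (th (meet A a b)) (rmeet (th a) (th b))) /\
  (forall a, req (th (ad A a)) (rad (th a))) /\
  (forall a b, req (th a) (th b) -> a = b) /\
  (forall x : X, exists a y, th a x y \/ th a y x).

Definition representable (A : alg) : Prop :=
  exists (X : Type) (th : A -> rel X), @is_rep A X th.

Definition le (A : alg) (a b : A) : Prop := meet A a b = a.
Definition is_zero (A : alg) (z : A) : Prop := exists a : A, z = comp A (ad A a) a.
Definition atom (A : alg) (x : A) : Prop :=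
  ~ is_zero A x /\ forall y, le A y x -> ~ is_zero A y -> y = x.
Definition atomic (A : alg) : Prop :=
  forall a : A, ~ is_zero A a -> exists x, atom A x /\ le A x a.

Definition is_lub (A : alg) (S : A -> Prop) (j : A) : Prop :=
  (forall s, S s -> le A s j) /\
  (forall u, (forall s, S s -> le A s u) -> le A j u).

Definition left_distr (A : alg) : Prop :=
  forall (a : A) (S : A -> Prop) (j : A), is_lub A S j ->
    is_lub A (fun t => exists s, S s /\ t = comp A a s) (comp A a j).

Definition complete_rep (A : alg) (X : Type) (th : A -> rel X) : Prop :=
  @is_rep A X th /\
  forall (S : A -> Prop) (j : A), is_lub A S j ->
    req (th j) (fun x y => exists s, S s /\ th s x y).

Definition At (A : alg) : Type := { x : A | atom A x }.
Definition theta (A : alg) (a : A) : rel (At A) :=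
  fun x y => ~ is_zero A (comp A (proj1_sig x) a) /\ proj1_sig y = comp A (proj1_sig x) a.

(* Main.v *)
Require Import Defs.
From Stdlib Require Import Classical ProofIrrelevance.

Section R.
Context {A : alg} {X : Type} {r : A -> rel X}.
Hypothesis Hr : @is_rep A X r.

Lemma rf a p q q' : r a p q -> r a p q' -> q = q'.
Proof. destruct Hr as [H _]. apply H. Qed.
Lemma compE a b p q : r (comp A a b) p q <-> exists y, r a p y /\ r b y q.
Proof. destruct Hr as [_ [H _]]. apply H. Qed.
Lemma meetE a b p q : r (meet A a b) p q <-> r a p q /\ r b p q.
Proof. destruct Hr as [_ [_ [H _]]]. apply H. Qed.
Lemma adE a p q : r (ad A a) p q <-> p = q /\ ~ exists z, r a p z.
Proof. destruct Hr as [_ [_ [_ [H _]]]]. apply H. Qed.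
Lemma rinj a b : (forall p q, r a p q <-> r b p q) -> a = b.
Proof. destruct Hr as [_ [_ [_ [_ [H _]]]]]. apply H. Qed.

Lemma zeroE z : is_zero A z <-> forall p q, ~ r z p q.
Proof.
  split.
  - intros [a ->] p q H. apply compE in H as [y [H1 H2]].
    apply adE in H1 as [<- H1]. eauto.
  - intros H. exists z. apply rinj. intros p q; split; intros H1.
    + exfalso; eapply H; eauto.
    + apply compE in H1 as [y [H1 H2]]. apply adE in H1 as [<- H1].
      exfalso; eauto.
Qed.

Lemma nzE z : ~ is_zero A z <-> exists p q, r z p q.
Proof.
  rewrite zeroE. split.
  - intros H. apply NNPP. intros H1. apply H. intros p q H2. apply H1; eauto.
  - intros [p [q H]] H1. eapply H1; eauto.
Qed.

Lemma leE a b : le A a b <-> forall p q, r a p q -> r b p q.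
Proof.
  unfold le; split.
  - intros H p q H1. rewrite <- H in H1. apply meetE in H1. tauto.
  - intros H. apply rinj. intros p q. rewrite meetE. firstorder.
Qed.

Lemma atom_eq x y : atom A x -> (forall p q, r y p q -> r x p q) ->
  ~ is_zero A y -> y = x.
Proof.
  intros [_ Hx] H1 H2. apply Hx; auto. apply leE; auto.
Qed.

Lemma part1 x a : atom A x -> ~ is_zero A (comp A x a) -> atom A (comp A x a).
Proof.
  intros Hx Hnz. split; auto. intros y Hy Hynz.
  rewrite leE in Hy.
  set (z := comp A (ad A (ad A y)) x).
  assert (Hz : forall p q, r z p q <-> (exists t, r y p t) /\ r x p q).
  { intros p q. unfold z. rewrite compE. split.
    - intros [w [H1 H2]]. apply adE in H1 as [<- H1].
      split; auto. apply NNPP; intros H3. apply H1. exists p.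
      apply adE. split; auto.
    - intros [H1 H2]. exists p. split; auto. apply adE. split; auto.
      intros [w Hw]. apply adE in Hw as [_ Hw]. auto. }
  clearbody z.
  assert (zx : z = x).
  { apply atom_eq; auto.
    - intros p q H. apply Hz in H. tauto.
    - apply nzE in Hynz as [p [q H]]. apply Hy in H as H'.
      apply compE in H' as [w [H1 H2]]. apply nzE. exists p, w.
      apply Hz. eauto. }
  rewrite <- zx. apply rinj. intros p q. rewrite compE. split.
  - intros H.
    apply Hy in H as H'. apply compE in H' as [w [H1 H2]].
    exists w. split; auto. apply Hz. eauto.
  - intros [w [H1 H2]].
    apply Hz in H1 as [[t Ht] H1]. apply Hy in Ht as Ht'.
    apply compE in Ht' as [v' [H4 H5]].
    rewrite (rf _ _ _ _ H1 H4) in H2. rewrite (rf _ _ _ _ H2 H5). auto.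
Qed.

Lemma assoc a b c : comp A (comp A a b) c = comp A a (comp A b c).
Proof.
  apply rinj; intros p q. rewrite !compE. split.
  - intros [y [H1 H2]]. apply compE in H1 as [w [H1 H3]].
    exists w. split; auto. apply compE; eauto.
  - intros [y [H1 H2]]. apply compE in H2 as [w [H2 H3]].
    exists w. split; auto. apply compE; eauto.
Qed.

Lemma meet_sub x a b : atom A x -> ~ is_zero A (comp A x (meet A a b)) ->
  comp A x (meet A a b) = comp A x a.
Proof.
  intros Hx Hnz.
  assert (Hs : forall p q, r (comp A x (meet A a b)) p q -> r (comp A x a) p q).
  { intros p q H. apply compE in H as [w [H1 H2]]. apply meetE in H2.
    apply compE. exists w. tauto. }
  apply atom_eq; auto. apply part1; auto.
  intros Hz. apply Hnz. apply zeroE. intros p q H. apply Hs in H.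
  eapply zeroE; eauto.
Qed.

Lemma meet_comm a b : meet A a b = meet A b a.
Proof. apply rinj; intros p q. rewrite !meetE. tauto. Qed.

Lemma meet_eq x a b : comp A x a = comp A x b ->
  comp A x (meet A a b) = comp A x a.
Proof.
  intros E. apply rinj. intros p q. rewrite !compE. split.
  - intros [w [H1 H2]]. apply meetE in H2. exists w. tauto.
  - intros [w [H1 H2]]. assert (H3 : r (comp A x b) p q).
    { rewrite <- E. apply compE. eauto. }
    apply compE in H3 as [w' [H3 H4]]. rewrite (rf _ _ _ _ H1 H3) in H2.
    exists w'. split; auto. apply meetE; auto.
Qed.

Lemma incl a b : (forall x, atom A x -> ~ is_zero A (comp A x a) ->
  comp A x b = comp A x a) -> atomic A -> forall p q, r a p q -> r b p q.
Proof.
  intros H Hat.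
  set (e := comp A (ad A (meet A a b)) (ad A (ad A a))).
  assert (He : forall p q, r e p q -> p = q /\ (exists u, r a p u) /\
              ~ exists t, r (meet A a b) p t).
  { intros p q H1. unfold e in H1. apply compE in H1 as [w [H1 H2]].
    apply adE in H1 as [<- H1]. apply adE in H2 as [<- H2].
    split; auto. split; auto. apply NNPP. intros H3. apply H2.
    exists p. apply adE. auto. }
  assert (Ez : is_zero A e).
  { apply NNPP. intros Hnz. destruct (Hat e Hnz) as [x [Hx Hxe]].
    rewrite leE in Hxe. pose proof Hx as Hx0. destruct Hx as [Hxnz Hx'].
    apply nzE in Hxnz as Hxnz'. destruct Hxnz' as [p [q Hpq]].
    destruct (He p q (Hxe _ _ Hpq)) as [<- [[u Hu] Hn]].
    assert (Hc : r (comp A x a) p u) by (apply compE; eauto).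
    rewrite <- H in Hc.
    - apply compE in Hc as [v [Hv1 Hv2]]. rewrite <- (rf _ _ _ _ Hpq Hv1) in Hv2.
      apply Hn. exists u. apply meetE. auto.
    - exact Hx0.
    - apply nzE. eauto. }
  intros p q Hpq. destruct (classic (exists t, r (meet A a b) p t)) as [[t Ht] | Hn].
  - apply meetE in Ht as [Ht1 Ht2]. rewrite (rf _ _ _ _ Hpq Ht1). auto.
  - exfalso. apply zeroE with (p := p) (q := p) in Ez. apply Ez.
    unfold e. apply compE. exists p. split.
    + apply adE; auto.
    + apply adE. split; auto. intros [z Hz]. apply adE in Hz as [_ Hz].
      eauto.
Qed.

End R.

Theorem mainTheorem13 (A : alg) :
  representable A -> atomic A -> left_distr A ->
  (forall (x a : A), atom A x -> ~ is_zero A (comp A x a) -> atom A (comp A x a)) /\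
  @complete_rep A (At A) (@theta A).
Proof.
  intros [X [r Hr]] Hat Hld.
  assert (P1 : forall (x a : A), atom A x -> ~ is_zero A (comp A x a) -> atom A (comp A x a))
    by (intros; eapply part1; eauto).
  assert (SigEq : forall u v : At A, proj1_sig u = proj1_sig v -> u = v).
  { intros [u hu] [v hv]; simpl; intros ->. f_equal. apply proof_irrelevance. }
  split; auto. split; [split; [|split; [|split; [|split; [|split]]]]|].
  - intros a x y z [_ H1] [_ H2]. apply SigEq. congruence.
  - intros a b x y; split.
  + intros [Hnz Hy]. destruct x as [x hx]; simpl in *.
    rewrite <- (assoc Hr) in Hnz, Hy.
    assert (Hxa : ~ is_zero A (comp A x a)).
    { intros Hz. apply Hnz. apply (zeroE Hr). intros p q H.
      apply (compE Hr) in H as [w [H _]]. eapply (zeroE Hr); eauto. }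
    exists (exist _ (comp A x a) (P1 _ _ hx Hxa)). unfold rmeet, rad, rcomp, theta; simpl. auto.
  + intros [w [[H1 H2] [H3 H4]]]. destruct x as [x hx]; destruct w as [w hw];
      unfold rmeet, rad, rcomp, theta; simpl in *. subst. rewrite <- (assoc Hr). split; auto.
  - intros a b x y; split.
  + intros [Hnz Hy]. destruct x as [x hx]; simpl in *.
    pose proof (meet_sub Hr x a b hx Hnz) as E1.
    rewrite (meet_comm Hr) in Hnz. pose proof (meet_sub Hr x b a hx Hnz) as E2.
    rewrite (meet_comm Hr) in E2, Hnz.
    unfold rmeet, rad, rcomp, theta; simpl. rewrite <- E1, <- E2. auto.
  + intros [[H1 H2] [H3 H4]]. destruct x as [x hx]; simpl in *.
    unfold rmeet, rad, rcomp, theta; simpl. rewrite (meet_eq Hr); [|congruence]. auto.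
  - intros a x y; split.
  + intros [Hnz Hy]. destruct x as [x hx]; simpl in *.
    assert (E : comp A x (ad A a) = x).
    { apply (atom_eq Hr); auto. intros p q H. apply (compE Hr) in H as [w [H1 H2]].
      apply (adE Hr) in H2 as [<- _]. auto. }
    split.
    * apply SigEq. simpl. congruence.
    * intros [z [Hz _]]. simpl in Hz. apply Hz. apply (zeroE Hr). intros p q H.
      apply (compE Hr) in H as [w [H1 H2]]. rewrite <- E in H1.
      apply (compE Hr) in H1 as [w' [H1 H3]]. apply (adE Hr) in H3 as [<- H3]. eauto.
  + intros [<- Hn]. destruct x as [x hx]; simpl in *.
    assert (Hxa : is_zero A (comp A x a)).
    { apply NNPP; intros Hnz. apply Hn.
      exists (exist _ (comp A x a) (P1 _ _ hx Hnz)). unfold rmeet, rad, rcomp, theta; simpl; auto. }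
    assert (E : comp A x (ad A a) = x).
    { apply (rinj Hr). intros p q. rewrite (compE Hr). split.
      - intros [w [H1 H2]]. apply (adE Hr) in H2 as [<- _]. auto.
      - intros H. exists q. split; auto. apply (adE Hr). split; auto.
        intros [t Ht]. eapply (zeroE Hr) in Hxa. apply Hxa. apply (compE Hr). eauto. }
    unfold rmeet, rad, rcomp, theta; simpl. rewrite E. split; auto. apply hx.
  - intros a b H. apply (rinj Hr). 
    assert (K : forall a b, (forall x y, theta a x y <-> theta b x y) ->
               forall p q, r a p q -> r b p q).
    { intros a0 b0 H0. apply (incl Hr); auto. intros x hx Hnz.
      assert (T : theta a0 (exist _ x hx) (exist _ (comp A x a0) (P1 _ _ hx Hnz)))
        by (unfold rmeet, rad, rcomp, theta; simpl; auto).
      apply H0 in T. destruct T as [_ T]. simpl in T. auto. }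
    intros p q; split; apply K; auto. intros; symmetry; apply H.
  - intros [x hx]. set (o := ad A (comp A (ad A x) x)).
    assert (E : comp A x o = x).
    { apply (rinj Hr). intros p q. rewrite (compE Hr). split.
      - intros [w [H1 H2]]. apply (adE Hr) in H2 as [<- _]. auto.
      - intros H. exists q. split; auto. apply (adE Hr). split; auto.
        intros [t Ht]. eapply (zeroE Hr); [exists x; reflexivity | eauto]. }
    exists o, (exist _ x hx). left. unfold rmeet, rad, rcomp, theta; simpl. rewrite E.
    split; auto. apply hx.
  - intros S j Hj [x hx] y. unfold rmeet, rad, rcomp, theta; simpl. split.
    + intros [Hnz Hy].
      destruct (classic (exists s, S s /\ ~ is_zero A (comp A x s))) as [[s [Hs Hsz]] | Hn].
      * exists s. split; auto.
        assert (E : comp A x s = comp A x j).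
        { apply (atom_eq Hr); auto. intros p q H.
          apply (compE Hr) in H as [w [H1 H2]]. apply (compE Hr). exists w.
          split; auto. eapply (leE Hr); eauto. apply Hj; auto. }
        rewrite E. auto.
      * exfalso. apply Hnz. destruct (Hld x S j Hj) as [_ Hub].
        assert (Hle : le A (comp A x j) (comp A (ad A x) x)).
        { apply Hub. intros t [s [Hs ->]]. apply (leE Hr). intros p q H.
          exfalso. destruct (classic (is_zero A (comp A x s))) as [Z|Z].
          - eapply (zeroE Hr); eauto.
          - apply Hn; eauto. }
        apply (zeroE Hr). intros p q H. eapply (leE Hr) in Hle; eauto.
        eapply (zeroE Hr); [exists x; reflexivity | eauto].
    + intros [s [Hs [Hsz Hy]]].
      assert (E : comp A x s = comp A x j).
      { apply (atom_eq Hr); auto.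
        - apply P1; auto. intros Hz. apply Hsz. apply (zeroE Hr). intros p q H.
          apply (compE Hr) in H as [w [H1 H2]]. eapply (zeroE Hr); [exact Hz|].
          apply (compE Hr). exists w. split; eauto. eapply (leE Hr); eauto. apply Hj; auto.
        - intros p q H.
          apply (compE Hr) in H as [w [H1 H2]]. apply (compE Hr). exists w.
          split; auto. eapply (leE Hr); eauto. apply Hj; auto. }
      rewrite <- E. auto.
Qed.
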